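(* Let $\mathcal{G}$ be a finite groupoid, $R$ a unital ring, $\alpha=(\{D_g\},\{\alpha_g\},\{w_{g,h}\})$ a globalizable groupoid twisted partial action of $\mathcal{G}$ on $R$, and $\beta=(\{E_g\},\{\beta_g\},\{u_{g,h}\})$ a globalization of $\alpha$, a groupoid twisted global action of $\mathcal{G}$ on a ring $T$. Then the rings $R \rtimes_{\alpha,w} \mathcal{G}$ and $T \rtimes_{\beta,u} \mathcal{G}$ are Morita equivalent.
   Context: Rings are associative, not necessarily unital. Groupoid: nonempty set $\mathcal{G}$ with partial associative product, each $g$ having right identity $d(g)=g^{-1}g$, left identity $r(g)=gg^{-1}$ and inverse $g^{-1}$; $gh$ defined iff $d(g)=r(h)$; $\mathcal{G}_0$ identities, $\mathcal{G}^2$ composable pairs, $\mathcal{G}^3$ composable triples. $\mathcal{M}(A)$ denotes the multiplier ring of a ring $A$ (pairs $(R,L)$, $R$ a right-module endomorphism written on the right, $L$ a left-module endomorphism, $(aR)b=a(Lb)$; $aw=(a)R$, $wa=L(a)$). A groupoid twisted partial action of $\mathcal{G}$ on $R$: $(\{D_g\},\{\alpha_g\},\{w_{g,h}\})$ with $D_{r(g)}$ an ideal of $R$, $D_g$ an ideal of $D_{r(g)}$, $\alpha_g:D_{g^{-1}}\to D_g$ ring isomorphisms, $w_{g,h}$ invertible in $\mathcal{M}(D_gD_{gh})$ for $(g,h)\in\mathcal{G}^2$, such that for all $(g,h,t)\in\mathcal{G}^3$: $D_g^2=D_g$, $D_gD_h=D_hD_g$; $D_e=D_{r(e)}$, $\alpha_e=\mathrm{id}$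 ($e\in\mathcal{G}_0$); $\alpha_g(D_{g^{-1}}D_h)=D_gD_{gh}$; $\alpha_g\alpha_h(a)=w_{g,h}\alpha_{gh}(a)w_{g,h}^{-1}$ for $a\in D_{h^{-1}}D_{h^{-1}g^{-1}}$; $w_{r(g),g}=w_{g,d(g)}=\mathrm{id}_{\mathcal{M}(D_g)}$; $\alpha_g(aw_{h,t})w_{g,ht}=\alpha_g(a)w_{g,h}w_{gh,t}$ for $a\in D_{g^{-1}}D_hD_{ht}$. It is global if $D_g=D_{r(g)}$ for all $g$. A global action $\beta$ on $T$ is a globalization of $\alpha$ (and $\alpha$ is globalizable) if there are ring monomorphisms $\varphi_e:D_e\to E_e$ ($e\in\mathcal{G}_0$) with: $\varphi_e(D_e)$ an ideal of $E_e$; $E_g=\sum_{r(h)=r(g)}\beta_h(\varphi_{d(h)}(D_{d(h)}))$; $\varphi_{r(g)}(D_g)=\varphi_{r(g)}(D_{r(g)})\cap\beta_g(\varphi_{d(g)}(D_{d(g)}))$; $\beta_g\varphi_{d(g)}=\varphi_{r(g)}\alpha_g$ on $D_{g^{-1}}$; $\varphi_{r(g)}(aw_{g,h})=\varphi_{r(g)}(a)u_{g,h}$, $\varphi_{r(g)}(w_{g,h}a)=u_{g,h}\varphi_{r(g)}(a)$ for $a\in D_gD_{gh}$. Twisted crossed product $R\rtimes_{\alpha,w}\mathcal{G}=\bigoplus_gD_g\delta_g$ with $(a_g\delta_g)(b_h\delta_h)=\alpha_g(\alpha_g^{-1}(a_g)b_h)w_{g,h}\delta_{gh}$ if $(g,h)\in\mathcal{G}^2$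 and $0$ otherwise; similarly for $T\rtimes_{\beta,u}\mathcal{G}$. Two rings are Morita equivalent if there is a Morita context between them with both pairings surjective (equivalently, their module categories are equivalent). *)

(* Defs.v *)
From mathcomp Require Import all_boot.
From Stdlib Require List.

Set Implicit Arguments.
Unset Strict Implicit.
Unset Printing Implicit Defensive.

Record rng := Rng {
  rcar :> Type;
  radd : rcar -> rcar -> rcar;
  rzero : rcar;
  ropp : rcar -> rcar;
  rmul : rcar -> rcar -> rcar;
  raddA : forall x y z, radd x (radd y z) = radd (radd x y) z;
  raddC : forall x y, radd x y = radd y x;
  radd0 : forall x, radd rzero x = x;
  raddN : forall x, radd (ropp x) x = rzero;
  rmulA : forall x y z, rmul x (rmul y z) = rmul (rmul x y) z;
  rmulDl : forall x y z, rmul (radd x y) z = radd (rmul x z) (rmul y z);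
  rmulDr : forall x y z, rmul x (radd y z) = radd (rmul x y) (rmul x z) }.

Arguments radd {r}. Arguments rzero {r}. Arguments ropp {r}. Arguments rmul {r}.

Definition unital (R : rng) : Prop :=
  exists one : R, forall x : R, rmul one x = x /\ rmul x one = x.

Definition seteq (T : Type) (A B : T -> Prop) : Prop := forall x, A x <-> B x.

Definition image (T U : Type) (f : T -> U) (A : T -> Prop) : U -> Prop :=
  fun y => exists x, A x /\ y = f x.

Definition sumprod (R : rng) (s : seq (R * R)%type) : R :=
  foldr (fun p acc => radd (rmul p.1 p.2) acc) rzero s.

Definition setmul (R : rng) (A B : R -> Prop) : R -> Prop :=
  fun x => exists s : seq (R * R)%type,
    List.Forall (fun p => A p.1 /\ B p.2) s /\ x = sumprod s.

Definition is_ideal_in (R : rng) (I J : R -> Prop) : Prop :=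
  (forall x, I x -> J x) /\ I rzero /\
  (forall x y, I x -> I y -> I (radd x y)) /\
  (forall x, I x -> I (ropp x)) /\
  (forall a b, I a -> J b -> I (rmul a b) /\ I (rmul b a)).

Definition is_ideal (R : rng) (I : R -> Prop) : Prop :=
  is_ideal_in I (fun _ => True).

Definition ring_iso_on (R : rng) (A B : R -> Prop) (f finv : R -> R) : Prop :=
  (forall x, A x -> B (f x)) /\ (forall y, B y -> A (finv y)) /\
  (forall x, A x -> finv (f x) = x) /\ (forall y, B y -> f (finv y) = y) /\
  (forall x y, A x -> A y -> f (radd x y) = radd (f x) (f y)) /\
  (forall x y, A x -> A y -> f (rmul x y) = rmul (f x) (f y)).

(* Multipliers of the ring I: w = (Rm, Lm), a w = Rm a, w a = Lm a.
   (Values outside I are irrelevant.) *)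
Definition is_mult (R : rng) (I : R -> Prop) (Rm Lm : R -> R) : Prop :=
  (forall a, I a -> I (Rm a) /\ I (Lm a)) /\
  (forall a b, I a -> I b ->
     Rm (radd a b) = radd (Rm a) (Rm b) /\ Lm (radd a b) = radd (Lm a) (Lm b)) /\
  (forall a b, I a -> I b -> Rm (rmul a b) = rmul a (Rm b)) /\
  (forall a b, I a -> I b -> Lm (rmul a b) = rmul (Lm a) b) /\
  (forall a b, I a -> I b -> rmul (Rm a) b = rmul a (Lm b)).

Definition mult_inverse (R : rng) (I : R -> Prop) (Rm Lm Rm' Lm' : R -> R) : Prop :=
  forall a, I a ->
    Rm' (Rm a) = a /\ Lm (Lm' a) = a /\ Rm (Rm' a) = a /\ Lm' (Lm a) = a.

Record groupoid := Groupoid {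
  gcar :> finType;
  gmul : gcar -> gcar -> gcar;   (* only meaningful on composable pairs *)
  ginv : gcar -> gcar;
  gnonempty : exists g : gcar, True;
  gcomp_dr : forall g h, gmul (ginv g) g = gmul h (ginv h) ->
     gmul (ginv (gmul g h)) (gmul g h) = gmul (ginv h) h /\
     gmul (gmul g h) (ginv (gmul g h)) = gmul g (ginv g);
  gassoc : forall g h k, gmul (ginv g) g = gmul h (ginv h) ->
     gmul (ginv h) h = gmul k (ginv k) ->
     gmul (gmul g h) k = gmul g (gmul h k);
  gunitr : forall g, gmul g (gmul (ginv g) g) = g;
  gunitl : forall g, gmul (gmul g (ginv g)) g = g;
  ginv_d : forall g, gmul (ginv (ginv g)) (ginv g) = gmul g (ginv g);
  ginv_r : forall g, gmul (ginv g) (ginv (ginv g)) = gmul (ginv g) g;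
  gid_d : forall g, let e := gmul (ginv g) g in
     gmul (ginv e) e = e /\ gmul e (ginv e) = e;
  gid_r : forall g, let e := gmul g (ginv g) in
     gmul (ginv e) e = e /\ gmul e (ginv e) = e }.

Arguments gmul {_} _ _. Arguments ginv {_} _.

Definition gd (G : groupoid) (g : G) : G := gmul (ginv g) g.
Definition gr (G : groupoid) (g : G) : G := gmul g (ginv g).
Definition composable (G : groupoid) (g h : G) : Prop := gd g = gr h.
Definition is_identity (G : groupoid) (e : G) : Prop := exists g, e = gd g.

Record tpa_data (G : groupoid) (R : rng) := TpaData {
  Dm : G -> R -> Prop;
  al : G -> R -> R;               (* alpha_g : D_{g^-1} -> D_g *)
  ali : G -> R -> R;              (* alpha_g^{-1} : D_g -> D_{g^-1} *)
  wR : G -> G -> R -> R;          (* a |-> a w_{g,h} *)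
  wL : G -> G -> R -> R;          (* a |-> w_{g,h} a *)
  wiR : G -> G -> R -> R;         (* a |-> a w_{g,h}^{-1} *)
  wiL : G -> G -> R -> R }.       (* a |-> w_{g,h}^{-1} a *)

Definition is_tpa (G : groupoid) (R : rng) (A : tpa_data G R) : Prop :=
  let D := Dm A in
  (forall g, is_ideal (D (gr g))) /\
  (forall g, is_ideal_in (D g) (D (gr g))) /\
  (forall g, ring_iso_on (D (ginv g)) (D g) (al A g) (ali A g)) /\
  (forall g h, composable g h ->
     let I := setmul (D g) (D (gmul g h)) in
     is_mult I (wR A g h) (wL A g h) /\ is_mult I (wiR A g h) (wiL A g h) /\
     mult_inverse I (wR A g h) (wL A g h) (wiR A g h) (wiL A g h)) /\
  (forall e, is_identity e ->
     seteq (D e) (D (gr e)) /\ (forall a, D e a -> al A e a = a)) /\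
  (forall g h t, composable g h -> composable h t ->
     seteq (setmul (D g) (D g)) (D g) /\
     seteq (setmul (D g) (D h)) (setmul (D h) (D g)) /\
     seteq (image (al A g) (setmul (D (ginv g)) (D h)))
           (setmul (D g) (D (gmul g h))) /\
     (forall a, setmul (D (ginv h)) (D (gmul (ginv h) (ginv g))) a ->
        al A g (al A h a) = wiR A g h (wL A g h (al A (gmul g h) a))) /\
     (forall a, D g a -> wR A (gr g) g a = a /\ wL A (gr g) g a = a) /\
     (forall a, D g a -> wR A g (gd g) a = a /\ wL A g (gd g) a = a) /\
     (forall a, setmul (setmul (D (ginv g)) (D h)) (D (gmul h t)) a ->
        wR A g (gmul h t) (al A g (wR A h t a)) =
        wR A (gmul g h) t (wR A g h (al A g a)))).

Definition is_global (G : groupoid) (R : rng) (A : tpa_data G R) : Prop :=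
  forall g, seteq (Dm A g) (Dm A (gr g)).

(* beta (on T) is a globalization of alpha (on R) via phi_e : D_e -> E_e *)
Definition is_globalization (G : groupoid) (R T : rng)
    (A : tpa_data G R) (B : tpa_data G T) (phi : G -> R -> T) : Prop :=
  let D := Dm A in let E := Dm B in
  is_global B /\
  (forall e, is_identity e ->
     (forall x, D e x -> E e (phi e x)) /\
     (forall x y, D e x -> D e y -> phi e (radd x y) = radd (phi e x) (phi e y)) /\
     (forall x y, D e x -> D e y -> phi e (rmul x y) = rmul (phi e x) (phi e y)) /\
     (forall x y, D e x -> D e y -> phi e x = phi e y -> x = y) /\
     is_ideal_in (image (phi e) (D e)) (E e)) /\
  (forall g, seteq (E g)
     (fun x => exists c : G -> T,
        (forall h, gr h = gr g -> image (al B h) (image (phi (gd h)) (D (gd h))) (c h)) /\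
        x = \big[@radd T/@rzero T]_(h : G | gr h == gr g) c h)) /\
  (forall g, seteq (image (phi (gr g)) (D g))
     (fun y => image (phi (gr g)) (D (gr g)) y /\
               image (al B g) (image (phi (gd g)) (D (gd g))) y)) /\
  (forall g a, D (ginv g) a -> al B g (phi (gd g) a) = phi (gr g) (al A g a)) /\
  (forall g h, composable g h -> forall a, setmul (D g) (D (gmul g h)) a ->
     phi (gr g) (wR A g h a) = wR B g h (phi (gr g) a) /\
     phi (gr g) (wL A g h a) = wL B g h (phi (gr g) a)).

(* Rings given as a distinguished subset of a type with operations     *)
(* (used for crossed products, whose elements are the f : G -> R with  *)
(* f g in D_g, i.e. sum_g f(g) delta_g).                               *)
Record sring := SRing {
  scar : Type;
  smem : scar -> Prop;
  sadd : scar -> scar -> scar;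
  szero : scar;
  sopp : scar -> scar;
  smul : scar -> scar -> scar }.

Definition crossed (G : groupoid) (R : rng) (A : tpa_data G R) : sring :=
  @SRing (G -> R)
    (fun f => forall g, Dm A g (f g))
    (fun f f' g => radd (f g) (f' g))
    (fun _ => rzero)
    (fun f g => ropp (f g))
    (fun f f' k =>
       \big[@radd R/@rzero R]_(g : G)
         \big[@radd R/@rzero R]_(h : G | (gd g == gr h) && (gmul g h == k))
            wR A g h (al A g (rmul (ali A g (f g)) (f' h)))).

Record abgrp := AbGrp {
  acar :> Type;
  aadd : acar -> acar -> acar;
  azero : acar;
  aopp : acar -> acar;
  aaddA : forall x y z, aadd x (aadd y z) = aadd (aadd x y) z;
  aaddC : forall x y, aadd x y = aadd y x;
  aadd0 : forall x, aadd azero x = x;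
  aaddN : forall x, aadd (aopp x) x = azero }.

Arguments aadd {_} _ _.

(* Morita context between A and B with both pairings surjective *)
Definition MoritaEquiv (A B : sring) : Prop :=
  exists (M N : abgrp)
         (lA : scar A -> M -> M) (rB : M -> scar B -> M)
         (lB : scar B -> N -> N) (rA : N -> scar A -> N)
         (tau : M -> N -> scar A) (sig : N -> M -> scar B),
  (forall a m m', smem a -> lA a (aadd m m') = aadd (lA a m) (lA a m')) /\
  (forall a a' m, smem a -> smem a' -> lA (sadd a a') m = aadd (lA a m) (lA a' m)) /\
  (forall a a' m, smem a -> smem a' -> lA (smul a a') m = lA a (lA a' m)) /\
  (forall b m m', smem b -> rB (aadd m m') b = aadd (rB m b) (rB m' b)) /\
  (forall b b' m, smem b -> smem b' -> rB m (sadd b b') = aadd (rB m b) (rB m b')) /\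
  (forall b b' m, smem b -> smem b' -> rB m (smul b b') = rB (rB m b) b') /\
  (forall a b m, smem a -> smem b -> lA a (rB m b) = rB (lA a m) b) /\
  (forall b n n', smem b -> lB b (aadd n n') = aadd (lB b n) (lB b n')) /\
  (forall b b' n, smem b -> smem b' -> lB (sadd b b') n = aadd (lB b n) (lB b' n)) /\
  (forall b b' n, smem b -> smem b' -> lB (smul b b') n = lB b (lB b' n)) /\
  (forall a n n', smem a -> rA (aadd n n') a = aadd (rA n a) (rA n' a)) /\
  (forall a a' n, smem a -> smem a' -> rA n (sadd a a') = aadd (rA n a) (rA n a')) /\
  (forall a a' n, smem a -> smem a' -> rA n (smul a a') = rA (rA n a) a') /\
  (forall a b n, smem a -> smem b -> lB b (rA n a) = rA (lB b n) a) /\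
  (forall m n, smem (tau m n)) /\
  (forall m m' n, tau (aadd m m') n = sadd (tau m n) (tau m' n)) /\
  (forall m n n', tau m (aadd n n') = sadd (tau m n) (tau m n')) /\
  (forall m n b, smem b -> tau (rB m b) n = tau m (lB b n)) /\
  (forall a m n, smem a -> tau (lA a m) n = smul a (tau m n)) /\
  (forall a m n, smem a -> tau m (rA n a) = smul (tau m n) a) /\
  (forall n m, smem (sig n m)) /\
  (forall n n' m, sig (aadd n n') m = sadd (sig n m) (sig n' m)) /\
  (forall n m m', sig n (aadd m m') = sadd (sig n m) (sig n m')) /\
  (forall n m a, smem a -> sig (rA n a) m = sig n (lA a m)) /\
  (forall b n m, smem b -> sig (lB b n) m = smul b (sig n m)) /\
  (forall b n m, smem b -> sig n (rB m b) = smul (sig n m) b) /\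
  (forall m n m', lA (tau m n) m' = rB m (sig n m')) /\
  (forall n m n', lB (sig n m) n' = rA n (tau m n')) /\
  (forall a, smem a -> exists s : seq (M * N)%type,
     a = foldr (fun p acc => sadd (tau p.1 p.2) acc) (szero A) s) /\
  (forall b, smem b -> exists s : seq (N * M)%type,
     b = foldr (fun p acc => sadd (sig p.1 p.2) acc) (szero B) s).

(* Main.v *)
Require Import Defs.
From mathcomp Require Import all_boot.
From HB Require Import structures.
From Stdlib Require Import FunctionalExtensionality ProofIrrelevance ClassicalEpsilon.
Set Implicit Arguments. Unset Strict Implicit. Unset Printing Implicit Defensive.
Set Warnings "-notation-overridden,-redundant-canonical-projection".
Local Notation image := Defs.image.


HB.instance Definition _ (X : rng) :=
  Monoid.isComLaw.Build X rzero radd (@raddA X) (@raddC X) (@radd0 X).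

Section RngLemmas.
Variable X : rng.
Implicit Types x y z : X.

Lemma addr0 x : radd x rzero = x.
Proof. by rewrite raddC radd0. Qed.
Lemma addrN x : radd x (ropp x) = rzero.
Proof. by rewrite raddC raddN. Qed.
Lemma addrI x y z : radd x y = radd x z -> y = z.
Proof.
move=> H. have := f_equal (radd (ropp x)) H.
by rewrite !raddA raddN !radd0.
Qed.
Lemma addr_eq0 x y : radd x y = x -> y = rzero.
Proof. by move=> H; apply: (@addrI x); rewrite H addr0. Qed.
Lemma mul0r x : rmul rzero x = rzero.
Proof. apply: (@addr_eq0 (rmul rzero x)). by rewrite -rmulDl radd0. Qed.
Lemma mulr0 x : rmul x rzero = rzero.
Proof. apply: (@addr_eq0 (rmul x rzero)). by rewrite -rmulDr radd0. Qed.
Lemma opp_uniq x y : radd y x = rzero -> y = ropp x.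
Proof. move=> H; apply: (@addrI x); by rewrite raddC H addrN. Qed.

Definition subgrp (S : X -> Prop) :=
  S rzero /\ (forall x y, S x -> S y -> S (radd x y)) /\ (forall x, S x -> S (ropp x)).
Definition ideal_of (J I : X -> Prop) :=
  (forall x, J x -> I x) /\ (forall x y, J x -> I y -> J (rmul x y) /\ J (rmul y x)).
Definition idem (J : X -> Prop) := forall x, J x -> setmul J J x.
Definition sub (A B : X -> Prop) := forall x, A x -> B x.

Lemma ideal_in_split (J I : X -> Prop) : is_ideal_in J I -> subgrp J /\ ideal_of J I.
Proof. rewrite /is_ideal_in /subgrp /ideal_of; move=> [h1 [h2 [h3 [h4 h5]]]]; split; [split; [|split] | split]; done. Qed.

Lemma sumprod_in (S : X -> Prop) s : subgrp S ->
  (forall x y, S x -> S y -> S (rmul x y)) ->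
  List.Forall (fun p => S p.1 /\ S p.2) s -> S (sumprod s).
Proof.
move=> [S0 [Sa _]] Sm; elim: s => [|p s IH] //= H; inversion H; subst.
apply: Sa; [apply: Sm; tauto | exact: IH].
Qed.

Lemma sumprod_ideal (J A B : X -> Prop) s : subgrp J ->
  (forall x y, A x -> B y -> J (rmul x y)) ->
  List.Forall (fun p => A p.1 /\ B p.2) s -> J (sumprod s).
Proof.
move=> [S0 [Sa _]] Sm; elim: s => [|p s IH] //= H; inversion H; subst.
apply: Sa; [apply: Sm; tauto | exact: IH].
Qed.

Lemma setmul_in (J A B : X -> Prop) x : subgrp J ->
  (forall x y, A x -> B y -> J (rmul x y)) -> setmul A B x -> J x.
Proof. move=> HJ Hm [s [Hs ->]]; exact: sumprod_ideal Hm Hs. Qed.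

Lemma setmul1 (A B : X -> Prop) x y : A x -> B y -> setmul A B (rmul x y).
Proof. move=> ha hb; exists [:: (x, y)]; split; first by constructor.
by rewrite /sumprod /= addr0. Qed.

Lemma setmul0 (A B : X -> Prop) : setmul A B rzero.
Proof. by exists [::]. Qed.

Lemma setmul_add (A B : X -> Prop) x y : setmul A B x -> setmul A B y ->
  setmul A B (radd x y).
Proof.
move=> [s [Hs ->]] [t [Ht ->]]; exists (s ++ t); split.
  by apply/List.Forall_app.
rewrite /sumprod; elim: s {Hs} => [|p s IH] /=; first by rewrite radd0.
by rewrite -IH raddA.
Qed.

Lemma setmul_mono (A B A' B' : X -> Prop) x : sub A A' -> sub B B' ->
  setmul A B x -> setmul A' B' x.
Proof.
move=> hA hB [s [Hs ->]]; exists s; split => //.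
by apply: List.Forall_impl Hs => p [] /hA ? /hB.
Qed.

End RngLemmas.

Section Morph.
Variable X : rng.
Lemma morph0 (S : X -> Prop) (Y : rng) (f : X -> Y) : S rzero ->
  (forall x y, S x -> S y -> f (radd x y) = radd (f x) (f y)) -> f rzero = rzero.
Proof.
move=> S0 fa; apply: (@addr_eq0 _ (f rzero)); by rewrite -fa // radd0.
Qed.

Lemma morph_sumprod (S : X -> Prop) (Y : rng) (f : X -> Y) s : subgrp S ->
  (forall x y, S x -> S y -> S (rmul x y)) ->
  (forall x y, S x -> S y -> f (radd x y) = radd (f x) (f y)) ->
  (forall x y, S x -> S y -> f (rmul x y) = rmul (f x) (f y)) ->
  List.Forall (fun p => S p.1 /\ S p.2) s ->
  f (sumprod s) = sumprod (map (fun p => (f p.1, f p.2)) s).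
Proof.
move=> HS Sm fa fm; rewrite /sumprod; elim: s => [|p s IH] /= H.
  by apply: morph0 fa; case: HS.
inversion H; subst. have HS' := HS; case: HS' => [S0 [Sa _]].
rewrite fa; [|apply: Sm; tauto|exact: sumprod_in].
by rewrite fm ?IH //; tauto.
Qed.

Lemma morphN (S : X -> Prop) (Y : rng) (f : X -> Y) x : subgrp S -> S x ->
  (forall x y, S x -> S y -> f (radd x y) = radd (f x) (f y)) -> f (ropp x) = ropp (f x).
Proof.
move=> [S0 [Sa So]] Sx fa; apply: opp_uniq.
rewrite -fa ?raddN; [exact: morph0 fa| exact: So |done].
Qed.

End Morph.


Section Gen.
Variable X : rng.
Implicit Types x y z : X.

Definition mulcl (S : X -> Prop) := forall x y, S x -> S y -> S (rmul x y).

Lemma ideal_mulcl (J I : X -> Prop) : ideal_of J I -> mulcl J.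
Proof. by move=> [h1 h2] x y jx jy; apply: (proj1 (h2 _ _ jx (h1 _ jy))). Qed.

Lemma mult_pres (I J : X -> Prop) Rm Lm : is_mult I Rm Lm -> subgrp I -> mulcl I ->
  subgrp J -> ideal_of J I -> idem J -> forall x, J x -> J (Rm x) /\ J (Lm x).
Proof.
move=> [m1 [m2 [m3 [m4 m5]]]] HI HIm HJ HJI HJid x /HJid [s [Hs ->]].
have HJm := ideal_mulcl HJI.
case: HJI => JI JI2.
elim: s Hs => [|p s IH] Hs.
  rewrite /sumprod /=.
  have z1 : Rm rzero = rzero by apply: (morph0 (S:=I)); [case: HI|move=> a b ha hb; case: (m2 a b ha hb)].
  have z2 : Lm rzero = rzero by apply: (morph0 (S:=I)); [case: HI|move=> a b ha hb; case: (m2 a b ha hb)].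
  by rewrite z1 z2; case: HJ.
inversion Hs; subst. case: H1 => Jp1 Jp2.
have Jr : J (sumprod s) by apply: sumprod_in.
have [IH1 IH2] := IH H2.
have Ip : I (rmul p.1 p.2) by apply: HIm; apply: JI.
have [e1 e2] := m2 _ _ Ip (JI _ Jr).
change (sumprod (p :: s)) with (radd (rmul p.1 p.2) (sumprod s)).
rewrite e1 e2 m3 ?m4; try apply: JI => //.
case: HJ => _ [Ja _]; split; apply: Ja => //.
- by apply: (proj1 (JI2 _ _ Jp1 (proj1 (m1 _ (JI _ Jp2))))).
- by apply: (proj2 (JI2 _ _ Jp2 (proj2 (m1 _ (JI _ Jp1))))).
Qed.

Lemma is_mult_ext (I I' : X -> Prop) Rm Lm : seteq I I' -> is_mult I Rm Lm -> is_mult I' Rm Lm.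
Proof.
move=> E [m1 [m2 [m3 [m4 m5]]]]; split; [|split; [|split; [|split]]].
- by move=> a /E /m1 [] /E ? /E.
- by move=> a b /E ha /E hb; apply: m2.
- by move=> a b /E ha /E hb; apply: m3.
- by move=> a b /E ha /E hb; apply: m4.
- by move=> a b /E ha /E hb; apply: m5.
Qed.

Lemma mult_inverse_ext (I I' : X -> Prop) a b c d : seteq I I' ->
  mult_inverse I a b c d -> mult_inverse I' a b c d.
Proof. by move=> E H x /E /H. Qed.

Lemma iso_image (A B J : X -> Prop) f finv : ring_iso_on A B f finv -> subgrp A ->
  mulcl A -> subgrp J -> ideal_of J A -> idem J ->
  subgrp (image f J) /\ ideal_of (image f J) B /\ idem (image f J).
Proof.
move=> [i1 [i2 [i3 [i4 [i5 i6]]]]] HA HAm HJ [JA JA2] HJid.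
have HJ' := HJ; case: HJ' => J0 [Ja Jo].
split; [split; [|split] | split; [split|]].
- exists rzero; split => //; symmetry; apply: (morph0 (S:=A)) => //; by case: HA.
- move=> _ _ [x [jx ->]] [y [jy ->]]; exists (radd x y); split; first exact: Ja.
  by rewrite i5 //; apply: JA.
- move=> _ [x [jx ->]]; exists (ropp x); split; first exact: Jo.
  by rewrite (morphN (S:=A)) //; apply: JA.
- by move=> _ [x [/JA jx ->]]; apply: i1.
- move=> _ y [x [jx ->]] By; have Ay := i2 _ By.
  have [h1 h2] := JA2 _ _ jx Ay.
  split.
  + exists (rmul x (finv y)); split => //; by rewrite i6 ?i4 //; apply: JA.
  + exists (rmul (finv y) x); split => //; by rewrite i6 ?i4 //; apply: JA.
- move=> _ [x [/HJid [s [Hs ->]] ->]].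
  have HsA : List.Forall (fun p => A p.1 /\ A p.2) s.
    by apply: List.Forall_impl Hs => p [/JA ? /JA ?].
  rewrite (morph_sumprod (S:=A)) //.
  exists (map (fun p => (f p.1, f p.2)) s); split => //.
  apply/List.Forall_map; apply: List.Forall_impl Hs => p [h1 h2] /=.
  by split; [exists p.1 | exists p.2].
Qed.

Lemma big_in (I : finType) (P : pred I) (F : I -> X) (S : X -> Prop) : subgrp S ->
  (forall i, P i -> S (F i)) -> S (\big[radd/rzero]_(i | P i) F i).
Proof.
move=> [S0 [Sa _]] H; apply: big_ind => //. Qed.

Lemma big_morph_on (Y : rng) (I : finType) (P : pred I) (F : I -> X) (S : X -> Prop)
  (f : X -> Y) : subgrp S ->
  (forall x y, S x -> S y -> f (radd x y) = radd (f x) (f y)) ->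
  (forall i, P i -> S (F i)) ->
  f (\big[radd/rzero]_(i | P i) F i) = \big[radd/rzero]_(i | P i) f (F i).
Proof.
move=> HS fa H.
have HS' := HS; case: HS' => S0 [Sa _].
pose K (a : X) (b : Y) := S a /\ f a = b.
suff : K (\big[radd/rzero]_(i | P i) F i) (\big[radd/rzero]_(i | P i) f (F i)) by case.
apply: big_rec2; first by split => //; exact: morph0 fa.
by move=> i a b Pi [Sa' <-]; split; [apply: Sa => //; apply: H | apply: fa => //; apply: H].
Qed.

Lemma big_single2 (I J : finType) (C : I -> J -> bool) (F : I -> J -> X) i0 j0 :
  (forall i j, C i j -> (i != i0) || (j != j0) -> F i j = rzero) ->
  \big[radd/rzero]_(i : I) \big[radd/rzero]_(j | C i j) F i j =
  if C i0 j0 then F i0 j0 else rzero.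
Proof.
move=> H.
rewrite (bigD1 i0) //= [X in radd _ X]big1 ?addr0; last first.
  move=> i ni; apply: big1 => j Cij; apply: H => //; by rewrite ni.
rewrite big_mkcond (bigD1 j0) //= [X in radd _ X]big1 ?addr0; last first.
  move=> j nj; case Cj: (C i0 j) => //; apply: H => //; by rewrite nj orbT.
done.
Qed.

Lemma idem_setmul (S A B : X -> Prop) : idem S -> sub S A -> sub S B -> sub S (setmul A B).
Proof. by move=> Hi hA hB x /Hi; apply: setmul_mono. Qed.

Lemma iso_ext (A B A' B' : X -> Prop) f finv : seteq A A' -> seteq B B' ->
  ring_iso_on A B f finv -> ring_iso_on A' B' f finv.
Proof.
move=> EA EB [i1 [i2 [i3 [i4 [i5 i6]]]]].
split; [|split; [|split; [|split; [|split]]]].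
- by move=> x /EA /i1 /EB.
- by move=> x /EB /i2 /EA.
- by move=> x /EA /i3.
- by move=> x /EB /i4.
- by move=> x y /EA ? /EA ?; apply: i5.
- by move=> x y /EA ? /EA ?; apply: i6.
Qed.

End Gen.


Section Gpd.
Variable G : groupoid.
Implicit Types g h k t : G.

Lemma gd_inv g : gd (ginv g) = gr g. Proof. exact: ginv_d. Qed.
Lemma gr_inv g : gr (ginv g) = gd g. Proof. exact: ginv_r. Qed.
Lemma gr_mul g h : composable g h -> gr (gmul g h) = gr g.
Proof. by move=> c; case: (gcomp_dr c). Qed.
Lemma gd_mul g h : composable g h -> gd (gmul g h) = gd h.
Proof. by move=> c; case: (gcomp_dr c). Qed.
Lemma gr_gr g : gr (gr g) = gr g. Proof. by case: (gid_r g). Qed.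
Lemma gd_gr g : gd (gr g) = gr g. Proof. by case: (gid_r g). Qed.
Lemma gr_gd g : gr (gd g) = gd g. Proof. by case: (gid_d g). Qed.
Lemma gd_gd g : gd (gd g) = gd g. Proof. by case: (gid_d g). Qed.
Lemma gmul_r g : gmul (gr g) g = g. Proof. exact: gunitl. Qed.
Lemma gmul_d g : gmul g (gd g) = g. Proof. exact: gunitr. Qed.
Lemma gmulA g h k : composable g h -> composable h k ->
  gmul (gmul g h) k = gmul g (gmul h k).
Proof. exact: gassoc. Qed.
Lemma id_gr g : is_identity (gr g). Proof. by exists (ginv g); rewrite gd_inv. Qed.
Lemma id_gd g : is_identity (gd g). Proof. by exists g. Qed.
Lemma comp_gd g : composable g (gd g). Proof. by rewrite /composable gr_gd. Qed.
Lemma comp_gr g : composable (gr g) g. Proof. by rewrite /composable gd_gr. Qed.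
Lemma id_gr_eq (e : G) : is_identity e -> gr e = e.
Proof. by case=> g ->; rewrite gr_gd. Qed.
End Gpd.

Section TPA.
Variables (G : groupoid) (X : rng) (A : tpa_data G X).
Hypothesis HA : is_tpa A.
Local Notation D := (Dm A).
Implicit Types g h k t : G.

Lemma tpa_idr g : is_ideal (D (gr g)). Proof. by case: HA. Qed.
Lemma tpa_id g : is_ideal_in (D g) (D (gr g)). Proof. by case: HA => _ []. Qed.
Lemma tpa_iso g : ring_iso_on (D (ginv g)) (D g) (al A g) (ali A g).
Proof. by case: HA => _ [_ []]. Qed.
Lemma tpa_w g h : composable g h ->
  let I := setmul (D g) (D (gmul g h)) in
  is_mult I (wR A g h) (wL A g h) /\ is_mult I (wiR A g h) (wiL A g h) /\
  mult_inverse I (wR A g h) (wL A g h) (wiR A g h) (wiL A g h).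
Proof. by case: HA => _ [_ [_ [H _]]]; apply: H. Qed.
Lemma tpa_ide e : is_identity e -> forall a, D e a -> al A e a = a.
Proof. by case: HA => _ [_ [_ [_ [H _]]]] /H []. Qed.
Lemma tpa_6 g h t : composable g h -> composable h t ->
     seteq (setmul (D g) (D g)) (D g) /\
     seteq (setmul (D g) (D h)) (setmul (D h) (D g)) /\
     seteq (image (al A g) (setmul (D (ginv g)) (D h)))
           (setmul (D g) (D (gmul g h))) /\
     (forall a, setmul (D (ginv h)) (D (gmul (ginv h) (ginv g))) a ->
        al A g (al A h a) = wiR A g h (wL A g h (al A (gmul g h) a))) /\
     (forall a, D g a -> wR A (gr g) g a = a /\ wL A (gr g) g a = a) /\
     (forall a, D g a -> wR A g (gd g) a = a /\ wL A g (gd g) a = a) /\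
     (forall a, setmul (setmul (D (ginv g)) (D h)) (D (gmul h t)) a ->
        wR A g (gmul h t) (al A g (wR A h t a)) =
        wR A (gmul g h) t (wR A g h (al A g a))).
Proof. by case: HA => _ [_ [_ [_ [_ H6]]]]; apply: H6. Qed.
Lemma tpa_idem g : seteq (setmul (D g) (D g)) (D g).
Proof. by case: (tpa_6 (comp_gd g) (comp_gd (gd g))). Qed.
Lemma tpa_comm g h : composable g h -> seteq (setmul (D g) (D h)) (setmul (D h) (D g)).
Proof. by move=> c; case: (tpa_6 c (comp_gd h)) => _ []. Qed.
Lemma tpa_alim g h : composable g h ->
  seteq (image (al A g) (setmul (D (ginv g)) (D h))) (setmul (D g) (D (gmul g h))).
Proof. by move=> c; case: (tpa_6 c (comp_gd h)) => _ [_ []]. Qed.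
Lemma tpa_cocal g h : composable g h ->
  forall a, setmul (D (ginv h)) (D (gmul (ginv h) (ginv g))) a ->
        al A g (al A h a) = wiR A g h (wL A g h (al A (gmul g h) a)).
Proof. by move=> c; case: (tpa_6 c (comp_gd h)) => _ [_ [_ []]]. Qed.
Lemma tpa_wl g : forall a, D g a -> wR A (gr g) g a = a /\ wL A (gr g) g a = a.
Proof. by case: (tpa_6 (comp_gd g) (comp_gd (gd g))) => _ [_ [_ [_ []]]]. Qed.
Lemma tpa_wr g : forall a, D g a -> wR A g (gd g) a = a /\ wL A g (gd g) a = a.
Proof. by case: (tpa_6 (comp_gd g) (comp_gd (gd g))) => _ [_ [_ [_ [_ []]]]]. Qed.
Lemma tpa_cocw g h t : composable g h -> composable h t ->
  forall a, setmul (setmul (D (ginv g)) (D h)) (D (gmul h t)) a ->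
     wR A g (gmul h t) (al A g (wR A h t a)) =
     wR A (gmul g h) t (wR A g h (al A g a)).
Proof. by move=> c1 c2; case: (tpa_6 c1 c2) => _ [_ [_ [_ [_ []]]]]. Qed.

Lemma tpa_sub g : sub (D g) (D (gr g)). Proof. by case: (tpa_id g). Qed.
Lemma tpa_grp g : subgrp (D g). Proof. by case: (ideal_in_split (tpa_id g)). Qed.
Lemma tpa_idof g : ideal_of (D g) (D (gr g)). Proof. by case: (ideal_in_split (tpa_id g)). Qed.
Lemma tpa_mulcl g : mulcl (D g). Proof. exact: ideal_mulcl (tpa_idof g). Qed.
Lemma tpa_0 g : D g rzero. Proof. by case: (tpa_grp g). Qed.
Lemma tpa_add g x y : D g x -> D g y -> D g (radd x y).
Proof. by case: (tpa_grp g) => _ [H _]; apply: H. Qed.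
Lemma tpa_idm g : idem (D g). Proof. by move=> x /(tpa_idem g). Qed.

End TPA.


Definition fzero (G : Type) (X : rng) : G -> X := fun _ => rzero.
Definition fadd (G : Type) (X : rng) (f f' : G -> X) : G -> X := fun g => radd (f g) (f' g).
Definition dlt (G : finType) (X : rng) (g : G) (x : X) : G -> X :=
  fun k => if k == g then x else rzero.
Arguments fzero {G X}.

Lemma faddA (G : Type) (X : rng) (f1 f2 f3 : G -> X) :
  fadd f1 (fadd f2 f3) = fadd (fadd f1 f2) f3.
Proof. by apply: functional_extensionality => g; rewrite /fadd raddA. Qed.
Lemma fadd0 (G : Type) (X : rng) (f : G -> X) : fadd fzero f = f.
Proof. by apply: functional_extensionality => g; rewrite /fadd radd0. Qed.
Lemma fadd0r (G : Type) (X : rng) (f : G -> X) : fadd f fzero = f.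
Proof. by apply: functional_extensionality => g; rewrite /fadd addr0. Qed.
Lemma faddC (G : Type) (X : rng) (f f' : G -> X) : fadd f f' = fadd f' f.
Proof. by apply: functional_extensionality => g; rewrite /fadd raddC. Qed.

Lemma dlt_add (G : finType) (X : rng) (g : G) (x y : X) :
  dlt g (radd x y) = fadd (dlt g x) (dlt g y).
Proof. apply: functional_extensionality => k; rewrite /fadd /dlt; case: (k == g) => //. by rewrite radd0. Qed.
Lemma dlt0 (G : finType) (X : rng) (g : G) : dlt g (@rzero X) = fzero.
Proof. apply: functional_extensionality => k; rewrite /dlt; by case: (k == g). Qed.

Lemma fold_eval (G : finType) (X : rng) (F : G -> G -> X) s k :
  foldr (fun g acc => fadd (F g) acc) fzero s k = \big[radd/rzero]_(g <- s) F g k.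
Proof. elim: s => [|g s IH] /=; first by rewrite big_nil. by rewrite big_cons /fadd IH. Qed.

Lemma decomp (G : finType) (X : rng) (f : G -> X) :
  f = foldr (fun g acc => fadd (dlt g (f g)) acc) fzero (index_enum G).
Proof.
apply: functional_extensionality => k; rewrite fold_eval.
rewrite (bigD1 k) //= big1 ?addr0; first by rewrite /dlt eqxx.
by move=> g; rewrite /dlt eq_sym => /negbTE ->.
Qed.

Definition mulB (G : groupoid) (T : rng) (beta : tpa_data G T) (f f' : G -> T) (k : G) : T :=
  \big[radd/rzero]_(g : G) \big[radd/rzero]_(h | (gd g == gr h) && (gmul g h == k))
     wR beta g h (rmul (f g) (al beta g (f' h))).


Lemma sig_eq (Y : Type) (S : Y -> Prop) (a b : {x | S x}) :
  proj1_sig a = proj1_sig b -> a = b.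
Proof. case: a b => [x hx] [y hy] /= e; subst; f_equal; apply: proof_irrelevance. Qed.

Section SubAb.
Variables (Y : Type) (X : rng) (S : (Y -> X) -> Prop) (S0 : S fzero)
  (Sa : forall f f', S f -> S f' -> S (fadd f f'))
  (So : forall f, S f -> S (fun g => ropp (f g))).
Definition sab_add (a b : {f | S f}) : {f | S f} :=
  exist _ (fadd (proj1_sig a) (proj1_sig b)) (Sa (proj2_sig a) (proj2_sig b)).
Definition sab_zero : {f | S f} := exist _ fzero S0.
Definition sab_opp (a : {f | S f}) : {f | S f} := exist _ _ (So (proj2_sig a)).
Lemma sab_addA x y z : sab_add x (sab_add y z) = sab_add (sab_add x y) z.
Proof. by apply: sig_eq; rewrite /= faddA. Qed.
Lemma sab_addC x y : sab_add x y = sab_add y x.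
Proof. by apply: sig_eq; rewrite /= faddC. Qed.
Lemma sab_add0 x : sab_add sab_zero x = x.
Proof. by apply: sig_eq; rewrite /= fadd0. Qed.
Lemma sab_addN x : sab_add (sab_opp x) x = sab_zero.
Proof. apply: sig_eq; apply: functional_extensionality => g; by rewrite /= /fadd raddN. Qed.
Definition subab : abgrp := @AbGrp {f | S f} sab_add sab_zero sab_opp
  sab_addA sab_addC sab_add0 sab_addN.
Definition mkS (x : Y -> X) : {f | S f} :=
  match excluded_middle_informative (S x) with
  | left H => exist _ x H
  | right _ => sab_zero
  end.
Lemma mkS_val x : S x -> proj1_sig (mkS x) = x.
Proof. by rewrite /mkS; case: excluded_middle_informative. Qed.
End SubAb.


Section Main.
Variables (G : groupoid) (R T : rng) (alpha : tpa_data G R) (beta : tpa_data G T)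
  (phi : G -> R -> T).
Hypotheses (HA : is_tpa alpha) (HB : is_tpa beta) (Hgl : is_global beta)
  (HG : is_globalization alpha beta phi).
Local Notation E := (Dm beta).
Local Notation alB := (al beta).
Local Notation aliB := (ali beta).
Implicit Types g h k t : G.

Lemma EB g x : E g x <-> E (gr g) x. Proof. exact: Hgl. Qed.
Lemma Er_grp g : subgrp (E (gr g)).
Proof. by case: (ideal_in_split (tpa_idr HB g)). Qed.
Lemma Er0 g : E (gr g) rzero. Proof. by case: (Er_grp g). Qed.
Lemma Er_add g x y : E (gr g) x -> E (gr g) y -> E (gr g) (radd x y).
Proof. by case: (Er_grp g) => _ [H _]; apply: H. Qed.
Lemma Er_l g x y : E (gr g) x -> E (gr g) (rmul x y).
Proof. by move=> hx; case: (ideal_in_split (tpa_idr HB g)) => _ [_ H]; case: (H x y hx I). Qed.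
Lemma Er_r g x y : E (gr g) y -> E (gr g) (rmul x y).
Proof. by move=> hx; case: (ideal_in_split (tpa_idr HB g)) => _ [_ H]; case: (H y x hx I). Qed.
Lemma Er_mulcl g : mulcl (E (gr g)). Proof. by move=> x y hx _; apply: Er_l. Qed.
Lemma Er_idem g : idem (E (gr g)). Proof. exact: tpa_idm. Qed.
Lemma Ed_eq g : gd g = gr (gd g). Proof. by rewrite gr_gd. Qed.

Lemma alB_iso g : ring_iso_on (E (gr (gd g))) (E (gr g)) (alB g) (aliB g).
Proof.
apply: iso_ext (tpa_iso HB g).
- by move=> x; rewrite EB gr_inv gr_gd.
- by move=> x; rewrite EB.
Qed.
Lemma alB_in g x : E (gd g) x -> E (gr g) (alB g x).
Proof. by case: (alB_iso g) => h _; rewrite Ed_eq; apply: h. Qed.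
Lemma aliB_in g x : E (gr g) x -> E (gd g) (aliB g x).
Proof. by case: (alB_iso g) => _ [h _]; rewrite Ed_eq; apply: h. Qed.
Lemma alB_ali g x : E (gr g) x -> alB g (aliB g x) = x.
Proof. by case: (alB_iso g) => _ [_ [_ [h _]]]; apply: h. Qed.
Lemma aliB_al g x : E (gd g) x -> aliB g (alB g x) = x.
Proof. by case: (alB_iso g) => _ [_ [h _]]; rewrite Ed_eq; apply: h. Qed.
Lemma alB_add g x y : E (gd g) x -> E (gd g) y -> alB g (radd x y) = radd (alB g x) (alB g y).
Proof. by case: (alB_iso g) => _ [_ [_ [_ [h _]]]]; rewrite Ed_eq; apply: h. Qed.
Lemma alB_mul g x y : E (gd g) x -> E (gd g) y -> alB g (rmul x y) = rmul (alB g x) (alB g y).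
Proof. by case: (alB_iso g) => _ [_ [_ [_ [_ h]]]]; rewrite Ed_eq; apply: h. Qed.
Lemma alB0 g : alB g rzero = rzero.
Proof. apply: (morph0 (S := E (gd g))); [rewrite Ed_eq; exact: Er0 | exact: alB_add]. Qed.
Lemma alB_id g x : E (gr g) x -> alB (gr g) x = x.
Proof. move=> h; apply: (tpa_ide HB (id_gr g)); by rewrite EB gr_gr. Qed.

Lemma Iset g h : composable g h -> seteq (setmul (E g) (E (gmul g h))) (E (gr g)).
Proof.
move=> c x; split.
- apply: setmul_in; first exact: Er_grp.
  by move=> a b /EB ha _; apply: Er_l.
- move/Er_idem; apply: setmul_mono => y hy; apply/EB => //.
  by rewrite gr_mul.
Qed.

Section W.
Variables (g h : G) (c : composable g h).
Let Ig := E (gr g).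
Lemma wB : is_mult Ig (wR beta g h) (wL beta g h).
Proof. by apply: is_mult_ext (Iset c) _; case: (tpa_w HB c). Qed.
Lemma wiB : is_mult Ig (wiR beta g h) (wiL beta g h).
Proof. by apply: is_mult_ext (Iset c) _; case: (tpa_w HB c) => _ []. Qed.
Lemma winvB : mult_inverse Ig (wR beta g h) (wL beta g h) (wiR beta g h) (wiL beta g h).
Proof. by apply: mult_inverse_ext (Iset c) _; case: (tpa_w HB c) => _ []. Qed.
Lemma wR_in x : Ig x -> Ig (wR beta g h x). Proof. by case: wB => H _ /H []. Qed.
Lemma wL_in x : Ig x -> Ig (wL beta g h x). Proof. by case: wB => H _ /H []. Qed.
Lemma wiR_in x : Ig x -> Ig (wiR beta g h x). Proof. by case: wiB => H _ /H []. Qed.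
Lemma wiL_in x : Ig x -> Ig (wiL beta g h x). Proof. by case: wiB => H _ /H []. Qed.
Lemma wR_add x y : Ig x -> Ig y -> wR beta g h (radd x y) = radd (wR beta g h x) (wR beta g h y).
Proof. by case: wB => _ [H _] hx hy; case: (H _ _ hx hy). Qed.
Lemma wR_mul x y : Ig x -> Ig y -> wR beta g h (rmul x y) = rmul x (wR beta g h y).
Proof. by case: wB => _ [_ [H _]]; apply: H. Qed.
Lemma wRL x y : Ig x -> Ig y -> rmul (wR beta g h x) y = rmul x (wL beta g h y).
Proof. by case: wB => _ [_ [_ [_ H]]]; apply: H. Qed.
Lemma wR_wiR x : Ig x -> wR beta g h (wiR beta g h x) = x.
Proof. by move=> /winvB [_ [_ []]]. Qed.
Lemma wiR_wR x : Ig x -> wiR beta g h (wR beta g h x) = x.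
Proof. by move=> /winvB []. Qed.
Lemma wR0 : wR beta g h rzero = rzero.
Proof. apply: (morph0 (S := Ig)); [exact: Er0 | exact: wR_add]. Qed.
End W.

Lemma cocal_B g h : composable g h -> forall x, E (gd h) x ->
  alB g (alB h x) = wiR beta g h (wL beta g h (alB (gmul g h) x)).
Proof.
move=> c x hx; apply: (tpa_cocal HB c).
have hx' : E (gr (gd h)) x by rewrite gr_gd.
apply: (idem_setmul (S := E (gr (gd h)))) hx' => //; first exact: Er_idem.
- by move=> y; rewrite gr_gd => hy; apply/EB; rewrite gr_inv.
- move=> y; rewrite gr_gd => hy; apply/EB; rewrite gr_mul ?gr_inv //.
  by rewrite /composable gd_inv gr_inv.
Qed.

Lemma cocw_B g h t : composable g h -> composable h t -> forall x, E (gd g) x ->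
  wR beta g (gmul h t) (alB g (wR beta h t x)) =
  wR beta (gmul g h) t (wR beta g h (alB g x)).
Proof.
move=> c1 c2 x hx; apply: (tpa_cocw HB c1 c2).
have hx' : E (gr (gd g)) x by rewrite gr_gd.
apply: (idem_setmul (S := E (gr (gd g)))) hx' => //; first exact: Er_idem.
- apply: idem_setmul; first exact: Er_idem.
  + by move=> y; rewrite gr_gd => hy; apply/EB; rewrite gr_inv.
  + by move=> y; rewrite gr_gd => hy; apply/EB; rewrite -c1.
- by move=> y; rewrite gr_gd => hy; apply/EB; rewrite gr_mul // -c1.
Qed.

Lemma key_assoc g h t a b c : composable g h -> composable h t ->
  E (gr g) a -> E (gr h) b -> E (gr t) c ->
  wR beta (gmul g h) t (rmul (wR beta g h (rmul a (alB g b))) (alB (gmul g h) c)) =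
  wR beta g (gmul h t) (rmul a (alB g (wR beta h t (rmul b (alB h c))))).
Proof.
move=> c1 c2 Ea Eb Ec.
have rgh : gr (gmul g h) = gr g by apply: gr_mul.
have dgh : gd (gmul g h) = gd h by apply: gd_mul.
have rht : gr (gmul h t) = gr h by apply: gr_mul.
have c3 : composable (gmul g h) t by rewrite /composable dgh.
have c4 : composable g (gmul h t) by rewrite /composable rht.
have Eb' : E (gd g) b by rewrite c1.
have Ec' : E (gd h) c by rewrite c2.
have Ebg : E (gr g) (alB g b) by apply: alB_in.
have Ehc : E (gr h) (alB h c) by apply: alB_in.
have Ey : E (gr h) (rmul b (alB h c)) by apply: Er_l.
have Ey' : E (gd g) (rmul b (alB h c)) by rewrite c1.
have Eghc : E (gr g) (alB (gmul g h) c) by rewrite -rgh; apply: alB_in; rewrite dgh.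
have EwL : E (gr g) (wL beta g h (alB (gmul g h) c)) by apply: wL_in.
have EwRy : E (gd g) (wR beta h t (rmul b (alB h c))) by rewrite c1; apply: wR_in.
have -> : wR beta g (gmul h t) (rmul a (alB g (wR beta h t (rmul b (alB h c))))) =
   wR beta (gmul g h) t (rmul (rmul a (alB g b)) (wL beta g h (alB (gmul g h) c))).
  rewrite [in LHS](wR_mul c4) //; last by apply: alB_in.
  rewrite (cocw_B c1 c2) // (alB_mul Eb') //; last by rewrite c1.
  rewrite (cocal_B c1) // [in LHS](wR_mul c1) //; last by apply: wiR_in.
  rewrite (wR_wiR c1) //.
  rewrite -[in LHS](wR_mul c3) ?rgh ?rmulA //.
  by apply: Er_r.
by rewrite (wRL c1) //; apply: Er_r.
Qed.

Local Notation mul := (mulB beta).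
Definition SB (f : G -> T) := forall g, E (gr g) (f g).

Lemma SB0 : SB fzero. Proof. by move=> g; apply: Er0. Qed.
Lemma SB_add f f' : SB f -> SB f' -> SB (fadd f f').
Proof. by move=> h1 h2 g; apply: Er_add. Qed.
Lemma SB_dlt g x : E (gr g) x -> SB (dlt g x).
Proof. by move=> hx k; rewrite /dlt; case: eqP => [->|_] //; apply: Er0. Qed.
Lemma SB_smem f : SB f <-> @smem (crossed beta) f.
Proof.
rewrite /SB /=; split => H g; first exact: (proj2 (EB _ _) (H g)).
exact: (proj1 (EB _ _) (H g)).
Qed.

Lemma SB_ind (P : (G -> T) -> Prop) : P fzero ->
  (forall f1 f2, SB f1 -> SB f2 -> P f1 -> P f2 -> P (fadd f1 f2)) ->
  (forall g x, E (gr g) x -> P (dlt g x)) -> forall f, SB f -> P f.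
Proof.
move=> P0 Pa Pd f Sf; rewrite (decomp f).
suff : SB (foldr (fun g acc => fadd (dlt g (f g)) acc) fzero (index_enum G)) /\
       P (foldr (fun g acc => fadd (dlt g (f g)) acc) fzero (index_enum G)) by case.
elim: (index_enum G) => [|g s [IH1 IH2]] /=; first by split => //; apply: SB0.
have Sd : SB (dlt g (f g)) by apply: SB_dlt.
split; [exact: SB_add | apply: Pa => //; exact: Pd].
Qed.

Lemma smulB_eq f f' : SB f -> SB f' -> @smul (crossed beta) f f' = mul f f'.
Proof.
move=> Sf Sf'; apply: functional_extensionality => k /=.
apply: eq_bigr => g _; apply: eq_bigr => h /andP [/eqP c _].
have h1 : E (gd g) (aliB g (f g)) by apply: aliB_in.
have h2 : E (gd g) (f' h) by rewrite c; apply: Sf'.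
by rewrite (alB_mul h1 h2) alB_ali.
Qed.

Lemma mulB_dlt g h a b : E (gr g) a -> E (gr h) b ->
  mul (dlt g a) (dlt h b) =
  if gd g == gr h then dlt (gmul g h) (wR beta g h (rmul a (alB g b))) else fzero.
Proof.
move=> Ea Eb; apply: functional_extensionality => k; rewrite /mulB.
rewrite (big_single2 (i0:=g) (j0:=h)).
  rewrite /dlt !eqxx; case: eqP => c //=; case: eqP => e; case: eqP => e' //; congruence.
move=> g' h' /andP [/eqP c _] /orP [] ne; rewrite /dlt.
  by rewrite (negbTE ne) mul0r (wR0 c).
by rewrite (negbTE ne) alB0 // mulr0 (wR0 c).
Qed.

Lemma mulB_addl f1 f2 f' : SB f1 -> SB f2 -> SB f' ->
  mul (fadd f1 f2) f' = fadd (mul f1 f') (mul f2 f').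
Proof.
move=> S1 S2 S'; apply: functional_extensionality => k; rewrite /mulB /fadd -big_split.
apply: eq_bigr => g _; rewrite -big_split; apply: eq_bigr => h /andP [/eqP c _].
have h3 : E (gr g) (alB g (f' h)) by apply: alB_in; rewrite c; apply: S'.
by rewrite rmulDl (wR_add c) //; apply: Er_l.
Qed.

Lemma mulB_addr f f1 f2 : SB f -> SB f1 -> SB f2 ->
  mul f (fadd f1 f2) = fadd (mul f f1) (mul f f2).
Proof.
move=> S S1 S2; apply: functional_extensionality => k; rewrite /mulB /fadd -big_split.
apply: eq_bigr => g _; rewrite -big_split; apply: eq_bigr => h /andP [/eqP c _].
have h1 : E (gd g) (f1 h) by rewrite c; apply: S1.
have h2 : E (gd g) (f2 h) by rewrite c; apply: S2.
rewrite alB_add // rmulDr (wR_add c) //; apply: Er_l; exact: S.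
Qed.

Lemma mulB_0l f : mul fzero f = fzero.
Proof.
apply: functional_extensionality => k; rewrite /mulB big1 // => g _.
by apply: big1 => h /andP [/eqP c _]; rewrite mul0r (wR0 c).
Qed.

Lemma mulB_0r f : mul f fzero = fzero.
Proof.
apply: functional_extensionality => k; rewrite /mulB big1 // => g _.
by apply: big1 => h /andP [/eqP c _]; rewrite alB0 // mulr0 (wR0 c).
Qed.

Lemma mulB_in (S : G -> T -> Prop) f f' k :
  subgrp (S k) ->
  (forall g h, composable g h -> gmul g h = k -> S k (wR beta g h (rmul (f g) (alB g (f' h))))) ->
  S k (mul f f' k).
Proof.
move=> HS H; apply: big_in => // g _; apply: big_in => // h /andP [/eqP c /eqP e].
exact: H.
Qed.

Lemma SB_mulB f f' : SB f -> SB f' -> SB (mul f f').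
Proof.
move=> Sf Sf' k; apply: (mulB_in (S := fun k => E (gr k))); first exact: Er_grp.
move=> g h c <-; rewrite gr_mul //; apply: (wR_in c); exact: Er_l.
Qed.

Lemma Ew g h x y : composable g h -> E (gr g) x ->
  E (gr (gmul g h)) (wR beta g h (rmul x y)).
Proof. by move=> c hx; rewrite gr_mul //; apply: (wR_in c); apply: Er_l. Qed.

Lemma Ew' g h x y : composable g h -> E (gr g) x ->
  E (gr g) (wR beta g h (rmul x y)).
Proof. by move=> c hx; apply: (wR_in c); apply: Er_l. Qed.

Lemma mulB_assoc f1 f2 f3 : SB f1 -> SB f2 -> SB f3 ->
  mul (mul f1 f2) f3 = mul f1 (mul f2 f3).
Proof.
move=> S1; move: f1 S1 f2 f3.
apply: SB_ind.
- move=> f2 f3 S2 S3; by rewrite !mulB_0l.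
- move=> a1 a2 Sa1 Sa2 IH1 IH2 f2 f3 S2 S3.
  rewrite !mulB_addl ?IH1 ?IH2 //; by apply: SB_mulB.
move=> g a Ea f2 f3 S2 S3; move: f2 S2 f3 S3.
apply: (SB_ind (P := fun f2 => forall f3, SB f3 -> mul (mul (dlt g a) f2) f3 = mul (dlt g a) (mul f2 f3))).
- move=> f3 S3; by rewrite mulB_0r mulB_0l mulB_0r.
- move=> b1 b2 Sb1 Sb2 IH1 IH2 f3 S3.
  rewrite mulB_addr ?mulB_addl ?mulB_addr ?IH1 ?IH2 //; try apply: SB_mulB => //; try exact: SB_dlt.
move=> h b Eb.
apply: (SB_ind (P := fun f3 => mul (mul (dlt g a) (dlt h b)) f3 = mul (dlt g a) (mul (dlt h b) f3))).
- by rewrite !mulB_0r.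
- move=> c1 c2 Sc1 Sc2 IH1 IH2.
  rewrite !mulB_addr ?IH1 ?IH2 //; try apply: SB_mulB => //; try exact: SB_dlt.
move=> t c Ec.
rewrite (mulB_dlt Ea Eb) (mulB_dlt Eb Ec).
case: (eqVneq (gd g) (gr h)) => e1; last first.
  rewrite mulB_0l; case: (eqVneq (gd h) (gr t)) => e2; last by rewrite mulB_0r.
  have W2 : E (gr (gmul h t)) (wR beta h t (rmul b (alB h c))) by apply: Ew.
  by rewrite (mulB_dlt Ea W2) gr_mul // (negbTE e1).
have W1 : E (gr (gmul g h)) (wR beta g h (rmul a (alB g b))) by apply: Ew.
case: (eqVneq (gd h) (gr t)) => e2; last first.
  by rewrite mulB_0r (mulB_dlt W1 Ec) gd_mul // (negbTE e2).
have W2 : E (gr (gmul h t)) (wR beta h t (rmul b (alB h c))) by apply: Ew.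
rewrite (mulB_dlt W1 Ec) (mulB_dlt Ea W2).
rewrite gd_mul // gr_mul // e2 e1 !eqxx gmulA //.
by rewrite (key_assoc e1 e2).
Qed.


Local Notation D := (Dm alpha).
Implicit Types (e : G) (m n : G -> T).

Lemma phi_props e : is_identity e ->
     (forall x, D e x -> E e (phi e x)) /\
     (forall x y, D e x -> D e y -> phi e (radd x y) = radd (phi e x) (phi e y)) /\
     (forall x y, D e x -> D e y -> phi e (rmul x y) = rmul (phi e x) (phi e y)) /\
     (forall x y, D e x -> D e y -> phi e x = phi e y -> x = y) /\
     is_ideal_in (image (phi e) (D e)) (E e).
Proof. by case: HG => _ [H _]; apply: H. Qed.
Lemma phi_in e x : is_identity e -> D e x -> E e (phi e x).
Proof. by move=> ie; case: (phi_props ie) => H _; apply: H. Qed.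
Lemma phi_add e x y : is_identity e -> D e x -> D e y -> phi e (radd x y) = radd (phi e x) (phi e y).
Proof. by move=> ie; case: (phi_props ie) => _ [H _]; apply: H. Qed.
Lemma phi_mul e x y : is_identity e -> D e x -> D e y -> phi e (rmul x y) = rmul (phi e x) (phi e y).
Proof. by move=> ie; case: (phi_props ie) => _ [_ [H _]]; apply: H. Qed.
Lemma phi_inj e x y : is_identity e -> D e x -> D e y -> phi e x = phi e y -> x = y.
Proof. by move=> ie; case: (phi_props ie) => _ [_ [_ [H _]]]; apply: H. Qed.
Lemma phi_ideal e : is_identity e -> is_ideal_in (image (phi e) (D e)) (E e).
Proof. by move=> /phi_props [_ [_ [_ []]]]. Qed.
Lemma Edec g : seteq (E g)
     (fun x => exists c : G -> T,
        (forall h, gr h = gr g -> image (alB h) (image (phi (gd h)) (D (gd h))) (c h)) /\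
        x = \big[@radd T/@rzero T]_(h : G | gr h == gr g) c h).
Proof. by case: HG => _ [_ []]. Qed.
Lemma phiD g : seteq (image (phi (gr g)) (D g))
     (fun y => image (phi (gr g)) (D (gr g)) y /\
               image (alB g) (image (phi (gd g)) (D (gd g))) y).
Proof. by case: HG => _ [_ [_ []]]. Qed.
Lemma phi_al g a : D (ginv g) a -> alB g (phi (gd g) a) = phi (gr g) (al alpha g a).
Proof. by case: HG => _ [_ [_ [_ []]]] H _; apply: H. Qed.
Lemma phi_w g h : composable g h -> forall a, setmul (D g) (D (gmul g h)) a ->
     phi (gr g) (wR alpha g h a) = wR beta g h (phi (gr g) a).
Proof. by case: HG => _ [_ [_ [_ [_ H]]]] c a ha; case: (H g h c a ha). Qed.

Lemma Eid e : is_identity e -> gr e = e. Proof. exact: id_gr_eq. Qed.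
Lemma Ee_grp e : is_identity e -> subgrp (E e).
Proof. by move=> ie; rewrite -(Eid ie); apply: Er_grp. Qed.
Lemma Ee_mulcl e : is_identity e -> mulcl (E e).
Proof. by move=> ie; rewrite -(Eid ie); apply: Er_mulcl. Qed.

Definition P (e : G) := image (phi e) (D e).
Definition Q (g : G) := image (alB g) (P (gd g)).

Lemma P_grp e : is_identity e -> subgrp (P e).
Proof. by move=> /phi_ideal /ideal_in_split []. Qed.
Lemma P_idof e : is_identity e -> ideal_of (P e) (E e).
Proof. by move=> /phi_ideal /ideal_in_split []. Qed.
Lemma P_sub e y : is_identity e -> P e y -> E e y.
Proof. by move=> /P_idof [] H _; apply: H. Qed.
Lemma P0 e : is_identity e -> P e rzero.
Proof. by move=> /P_grp []. Qed.
Lemma P_idem e : is_identity e -> idem (P e).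
Proof.
move=> ie _ [x [/(tpa_idm HA) [s [Hs ->]] ->]].
have fa : forall u v, D e u -> D e v -> phi e (radd u v) = radd (phi e u) (phi e v).
  by move=> u v hu hv; apply: phi_add.
have fm : forall u v, D e u -> D e v -> phi e (rmul u v) = rmul (phi e u) (phi e v).
  by move=> u v hu hv; apply: phi_mul.
rewrite (morph_sumprod (tpa_grp HA e) (@tpa_mulcl _ _ _ HA e) fa fm Hs).
exists (map (fun p => (phi e p.1, phi e p.2)) s); split => //.
apply/List.Forall_map; apply: List.Forall_impl Hs => p [h1 h2] /=.
by split; [exists p.1 | exists p.2].
Qed.

Lemma Q_props g : subgrp (Q g) /\ ideal_of (Q g) (E (gr g)) /\ idem (Q g).
Proof.
apply: (iso_image (alB_iso g)).
- exact: Er_grp.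
- exact: Er_mulcl.
- apply: P_grp; exact: id_gd.
- rewrite gr_gd; apply: P_idof; exact: id_gd.
- apply: P_idem; exact: id_gd.
Qed.
Lemma Q_grp g : subgrp (Q g). Proof. by case: (Q_props g). Qed.
Lemma Q_idof g : ideal_of (Q g) (E (gr g)). Proof. by case: (Q_props g) => _ []. Qed.
Lemma Q_idem g : idem (Q g). Proof. by case: (Q_props g) => _ []. Qed.
Lemma Q_sub g y : Q g y -> E (gr g) y. Proof. by case: (Q_idof g) => H _; apply: H. Qed.
Lemma Q0 g : Q g rzero. Proof. by case: (Q_grp g). Qed.

Lemma P_w g h x : composable g h -> P (gr g) x ->
  P (gr g) (wR beta g h x) /\ P (gr g) (wL beta g h x) /\
  P (gr g) (wiR beta g h x) /\ P (gr g) (wiL beta g h x).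
Proof.
move=> c hx.
have ie := id_gr g.
have H1 := mult_pres (wB c) (Er_grp g) (@Er_mulcl g) (P_grp ie) (P_idof ie) (P_idem ie) hx.
have H2 := mult_pres (wiB c) (Er_grp g) (@Er_mulcl g) (P_grp ie) (P_idof ie) (P_idem ie) hx.
tauto.
Qed.

Lemma Q_w g h k x : composable g h -> gr k = gr g -> Q k x ->
  Q k (wR beta g h x) /\ Q k (wL beta g h x) /\
  Q k (wiR beta g h x) /\ Q k (wiL beta g h x).
Proof.
move=> c e hx.
have Hid : ideal_of (Q k) (E (gr g)) by rewrite -e; apply: Q_idof.
have H1 := mult_pres (wB c) (Er_grp g) (@Er_mulcl g) (Q_grp k) Hid (@Q_idem k) hx.
have H2 := mult_pres (wiB c) (Er_grp g) (@Er_mulcl g) (Q_grp k) Hid (@Q_idem k) hx.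
tauto.
Qed.

Definition Mp (m : G -> T) := forall g, P (gr g) (m g).
Definition Np (n : G -> T) := forall g, Q g (n g).
Definition Cp (c : G -> T) := forall g, image (phi (gr g)) (D g) (c g).

Lemma Mp_SB m : Mp m -> SB m.
Proof. by move=> H g; apply: P_sub (H g); apply: id_gr. Qed.
Lemma Np_SB n : Np n -> SB n.
Proof. by move=> H g; apply: Q_sub. Qed.
Lemma Cp_Mp c : Cp c -> Mp c.
Proof. by move=> H g; case: (phiD g (c g)) => /(_ (H g)) [] ? _ _. Qed.
Lemma Cp_Np c : Cp c -> Np c.
Proof. by move=> H g; case: (phiD g (c g)) => /(_ (H g)) [] _ ? _. Qed.
Lemma Cp_SB c : Cp c -> SB c.
Proof. by move=> /Cp_Mp /Mp_SB. Qed.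

Lemma Mp_mul m b : Mp m -> SB b -> Mp (mul m b).
Proof.
move=> Hm Hb k; apply: (mulB_in (S := fun k => P (gr k))).
  by apply: P_grp; apply: id_gr.
move=> g h c <-; rewrite gr_mul //.
have Eb : E (gr g) (alB g (b h)) by apply: alB_in; rewrite c; exact: Hb.
case: (P_idof (id_gr g)) => _ H.
exact: (P_w c (H _ _ (Hm g) Eb).1).1.
Qed.

Lemma Np_mul b n : SB b -> Np n -> Np (mul b n).
Proof.
move=> Hb Hn k; apply: (mulB_in (S := Q)); first exact: Q_grp.
move=> g h c <-.
have rgh : gr (gmul g h) = gr g by apply: gr_mul.
suff Hq : Q (gmul g h) (rmul (b g) (alB g (n h))) by exact: (Q_w c rgh Hq).1.
have [p [Pp ->]] := Hn h.
have Ep : E (gd h) p by apply: P_sub Pp; exact: id_gd.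
rewrite cocal_B //.
have Qp : Q (gmul g h) (alB (gmul g h) p) by exists p; split => //; rewrite gd_mul.
have Q1 := (Q_w c rgh Qp).2.1.
have Q2 := (Q_w c rgh Q1).2.2.1.
case: (Q_idof (gmul g h)) => _ H; apply: (H _ _ Q2 _).2.
rewrite rgh; exact: Hb.
Qed.

Lemma Cp_mul m n : Mp m -> Np n -> Cp (mul m n).
Proof.
move=> Hm Hn k; apply/(phiD k); split.
- exact: (Mp_mul Hm (Np_SB Hn) k).
- exact: (Np_mul (Mp_SB Hm) Hn k).
Qed.


Definition Phi (a : G -> R) : G -> T := fun g => phi (gr g) (a g).
Definition SA (a : G -> R) := forall g, D g (a g).
Definition mulA (a a' : G -> R) := @smul (crossed alpha) a a'.

Lemma Dr_grp g : subgrp (D (gr g)). Proof. by case: (ideal_in_split (tpa_idr HA g)). Qed.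
Lemma phi0 e : is_identity e -> phi e rzero = rzero.
Proof.
move=> ie; apply: (morph0 (S := D e)); first exact: (@tpa_0 _ _ _ HA e).
by move=> x y hx hy; apply: phi_add.
Qed.

Lemma Dsub g x : D g x -> D (gr g) x. Proof. exact: (@tpa_sub _ _ _ HA g x). Qed.
Lemma D0 g : D g rzero. Proof. exact: (@tpa_0 _ _ _ HA g). Qed.
Lemma SA0 : SA fzero. Proof. by move=> g; apply: D0. Qed.
Lemma SA_add a a' : SA a -> SA a' -> SA (fadd a a').
Proof. by move=> h1 h2 g; apply: tpa_add. Qed.
Lemma SA_dlt g x : D g x -> SA (dlt g x).
Proof. by move=> hx k; rewrite /dlt; case: eqP => [->|_] //; apply: D0. Qed.

Lemma Phi_Cp a : SA a -> Cp (Phi a).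
Proof. by move=> Sa g; exists (a g). Qed.
Lemma Phi_add a a' : SA a -> SA a' -> Phi (fadd a a') = fadd (Phi a) (Phi a').
Proof.
move=> Sa Sa'; apply: functional_extensionality => g; rewrite /Phi /fadd.
by rewrite phi_add //; [exact: id_gr | apply: Dsub | apply: Dsub].
Qed.
Lemma Phi_dlt g x : Phi (dlt g x) = dlt g (phi (gr g) x).
Proof.
apply: functional_extensionality => k; rewrite /Phi /dlt.
case: eqP => [->|_] //; apply: phi0; exact: id_gr.
Qed.

Lemma alA_in g h x y : composable g h -> D g x -> D h y ->
  setmul (D g) (D (gmul g h)) (al alpha g (rmul (ali alpha g x) y)).
Proof.
move=> c hx hy.
have [_ [i2 _]] := tpa_iso HA g.
have Hu : setmul (D (ginv g)) (D h) (rmul (ali alpha g x) y) by apply: setmul1 => //; apply: i2.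
exact: (proj1 (tpa_alim HA c _) (ex_intro _ _ (conj Hu erefl))).
Qed.

Lemma termA_in g h x y : composable g h -> D g x -> D h y ->
  setmul (D g) (D (gmul g h)) (wR alpha g h (al alpha g (rmul (ali alpha g x) y))).
Proof.
move=> c hx hy; have Hv := alA_in c hx hy.
by case: (tpa_w HA c) => [[m1 _] _]; case: (m1 _ Hv).
Qed.

Lemma IA_sub g h z : composable g h -> setmul (D g) (D (gmul g h)) z -> D (gmul g h) z.
Proof.
move=> c; apply: (setmul_in (J := D (gmul g h))); first exact (tpa_grp HA (gmul g h)).
move=> u v hu hv; case: (tpa_idof HA (gmul g h)) => _ H.
apply: (H v u hv _).2; rewrite gr_mul //; exact: Dsub.
Qed.

Lemma SA_mul a a' : SA a -> SA a' -> SA (mulA a a').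
Proof.
move=> Sa Sa' k; rewrite /mulA /=.
apply: big_in => [|g _]; first exact (tpa_grp HA _).
apply: big_in => [|h /andP [/eqP c /eqP e]]; first exact (tpa_grp HA _).
by rewrite -e; apply: IA_sub => //; apply: termA_in.
Qed.

Lemma Phi_mul a a' : SA a -> SA a' -> Phi (mulA a a') = mul (Phi a) (Phi a').
Proof.
move=> Sa Sa'; apply: functional_extensionality => k; rewrite /Phi /mulA /mulB /=.
have fa : forall x y, D (gr k) x -> D (gr k) y ->
    phi (gr k) (radd x y) = radd (phi (gr k) x) (phi (gr k) y).
  by move=> x y hx hy; apply: phi_add => //; exact: id_gr.
have Tin : forall g h, (gd g == gr h) && (gmul g h == k) ->
    D (gr k) (wR alpha g h (al alpha g (rmul (ali alpha g (a g)) (a' h)))).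
  move=> g h /andP [/eqP c /eqP <-]; apply: Dsub.
  by apply: IA_sub => //; apply: termA_in.
rewrite (big_morph_on (Dr_grp k) fa); last first.
  by move=> g _; apply: big_in => [|h]; [exact: Dr_grp | exact: Tin].
apply: eq_bigr => g _; rewrite (big_morph_on (Dr_grp k) fa); last exact: Tin.
apply: eq_bigr => h /andP [/eqP c /eqP e]; subst k.
rewrite gr_mul // phi_w //; last by apply: alA_in.
congr (wR beta g h _).
have [_ [i2 [_ [i4 _]]]] := tpa_iso HA g.
set u := ali alpha g (a g).
have Du : D (ginv g) u by apply: i2.
have Du' : D (gd g) u by rewrite -gr_inv; apply: Dsub.
have Dv : D (gd g) (a' h) by rewrite c; apply: Dsub.
have Duv : D (ginv g) (rmul u (a' h)).
  case: (tpa_idof HA (ginv g)) => _ H; apply: (H _ _ Du _).1; by rewrite gr_inv.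
rewrite -phi_al // phi_mul //; last exact: id_gd.
rewrite alB_mul; try by apply: phi_in => //; exact: id_gd.
by rewrite phi_al // i4 // c.
Qed.

Definition pickD (e g : G) (y : T) : R :=
  match excluded_middle_informative (exists x, D g x /\ y = phi e x) with
  | left H => proj1_sig (constructive_indefinite_description _ H)
  | right _ => rzero
  end.
Lemma pickD_spec e g y : image (phi e) (D g) y ->
  D g (pickD e g y) /\ y = phi e (pickD e g y).
Proof.
rewrite /pickD; case: excluded_middle_informative => [H|H] Hy; last by case: (H Hy).
by case: constructive_indefinite_description.
Qed.
Definition Phinv (c : G -> T) : G -> R := fun g => pickD (gr g) g (c g).

Lemma Phi_Phinv c : Cp c -> Phi (Phinv c) = c.
Proof.
move=> Hc; apply: functional_extensionality => g; rewrite /Phi /Phinv.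
by case: (pickD_spec (Hc g)).
Qed.
Lemma SA_Phinv c : Cp c -> SA (Phinv c).
Proof. by move=> Hc g; case: (pickD_spec (Hc g)). Qed.
Lemma Phinv_Phi a : SA a -> Phinv (Phi a) = a.
Proof.
move=> Sa; apply: functional_extensionality => g; rewrite /Phinv.
have [Dx Ex] := pickD_spec (Phi_Cp Sa g).
symmetry; apply: (phi_inj (id_gr g)) => //; apply: Dsub => //.
Qed.
Lemma Phinv_add c c' : Cp c -> Cp c' -> Phinv (fadd c c') = fadd (Phinv c) (Phinv c').
Proof.
move=> Hc Hc'.
have -> : fadd c c' = Phi (fadd (Phinv c) (Phinv c')).
  by rewrite Phi_add ?Phi_Phinv //; apply: SA_Phinv.
by rewrite Phinv_Phi //; apply: SA_add; apply: SA_Phinv.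
Qed.


Lemma Mp0 : Mp fzero. Proof. move=> g; apply: P0; exact: id_gr. Qed.
Lemma Mp_add m m' : Mp m -> Mp m' -> Mp (fadd m m').
Proof. by move=> h1 h2 g; case: (P_grp (id_gr g)) => _ [H _]; apply: H. Qed.
Lemma Mp_opp m : Mp m -> Mp (fun g => ropp (m g)).
Proof. by move=> h1 g; case: (P_grp (id_gr g)) => _ [_ H]; apply: H. Qed.
Lemma Np0 : Np fzero. Proof. move=> g; apply: Q0. Qed.
Lemma Np_add m m' : Np m -> Np m' -> Np (fadd m m').
Proof. by move=> h1 h2 g; case: (Q_grp g) => _ [H _]; apply: H. Qed.
Lemma Np_opp m : Np m -> Np (fun g => ropp (m g)).
Proof. by move=> h1 g; case: (Q_grp g) => _ [_ H]; apply: H. Qed.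

Definition Mab := subab Mp0 Mp_add Mp_opp.
Definition Nab := subab Np0 Np_add Np_opp.
Definition Mty := {f : G -> T | Mp f}.
Definition Nty := {f : G -> T | Np f}.
Definition mkM (x : G -> T) : Mty := mkS Mp0 x.
Definition mkN (x : G -> T) : Nty := mkS Np0 x.

Definition lA (a : G -> R) (m : Mty) : Mty := mkM (mul (Phi a) (proj1_sig m)).
Definition rB (m : Mty) (b : G -> T) : Mty := mkM (mul (proj1_sig m) b).
Definition lB (b : G -> T) (n : Nty) : Nty := mkN (mul b (proj1_sig n)).
Definition rA (n : Nty) (a : G -> R) : Nty := mkN (mul (proj1_sig n) (Phi a)).
Definition tau (m : Mty) (n : Nty) : G -> R := Phinv (mul (proj1_sig m) (proj1_sig n)).
Definition sig (n : Nty) (m : Mty) : G -> T := mul (proj1_sig n) (proj1_sig m).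

Lemma vM (m : Mty) : Mp (proj1_sig m). Proof. exact: proj2_sig m. Qed.
Lemma vN (n : Nty) : Np (proj1_sig n). Proof. exact: proj2_sig n. Qed.
Lemma vMB (m : Mty) : SB (proj1_sig m). Proof. exact: Mp_SB (vM m). Qed.
Lemma vNB (n : Nty) : SB (proj1_sig n). Proof. exact: Np_SB (vN n). Qed.
Lemma PhiB a : SA a -> SB (Phi a). Proof. by move=> Sa; apply: Cp_SB; apply: Phi_Cp. Qed.

Lemma vlA a (m : Mty) : SA a -> proj1_sig (lA a m) = mul (Phi a) (proj1_sig m).
Proof. move=> Sa; rewrite /lA /mkM mkS_val //; apply: Mp_mul; [apply: Cp_Mp; exact: Phi_Cp | exact: vMB]. Qed.
Lemma vrB (m : Mty) b : SB b -> proj1_sig (rB m b) = mul (proj1_sig m) b.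
Proof. move=> Sb; rewrite /rB /mkM mkS_val //; apply: Mp_mul => //; exact: vM. Qed.
Lemma vlB b (n : Nty) : SB b -> proj1_sig (lB b n) = mul b (proj1_sig n).
Proof. move=> Sb; rewrite /lB /mkN mkS_val //; apply: Np_mul => //; exact: vN. Qed.
Lemma vrA (n : Nty) a : SA a -> proj1_sig (rA n a) = mul (proj1_sig n) (Phi a).
Proof. move=> Sa; rewrite /rA /mkN mkS_val //; apply: Np_mul; [exact: vNB | apply: Cp_Np; exact: Phi_Cp]. Qed.

Lemma Cmn (m : Mty) (n : Nty) : Cp (mul (proj1_sig m) (proj1_sig n)). Proof. apply: Cp_mul; [exact: vM | exact: vN]. Qed.

Definition FdA (s : seq (Mty * Nty)) := foldr (fun p acc => fadd (tau p.1 p.2) acc) fzero s.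
Definition SurAP (x : G -> R) := exists s, x = FdA s.
Lemma FdA_cat s1 s2 : FdA (s1 ++ s2) = fadd (FdA s1) (FdA s2).
Proof. elim: s1 => [|p s IH] /=; first by rewrite fadd0. by rewrite /FdA /= -/(FdA _) IH faddA. Qed.
Lemma SurAP0 : SurAP fzero. Proof. by exists [::]. Qed.
Lemma SurAP_add x y : SurAP x -> SurAP y -> SurAP (fadd x y).
Proof. by move=> [s ->] [t ->]; exists (s ++ t); rewrite FdA_cat. Qed.

Lemma SurAP_dlt1 g x1 x2 : D g x1 -> D g x2 -> SurAP (dlt g (rmul x1 x2)).
Proof.
move=> h1 h2.
have ie := id_gr g.
have d1 := Dsub h1. have d2 := Dsub h2.
have HM : Mp (dlt (gr g) (phi (gr g) x1)).
  move=> k; rewrite /dlt; case: eqP => [->|_]; last exact: P0 (id_gr k).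
  by rewrite gr_gr; exists x1.
have HN : Np (dlt g (phi (gr g) x2)).
  move=> k; rewrite /dlt; case: eqP => [->|_]; last exact: Q0.
  by case: (proj1 (phiD g _) (ex_intro _ x2 (conj h2 erefl))).
exists [:: (mkM (dlt (gr g) (phi (gr g) x1)), mkN (dlt g (phi (gr g) x2)))].
rewrite /FdA /= fadd0r /tau /mkM /mkN !mkS_val //.
have E1 : E (gr (gr g)) (phi (gr g) x1) by rewrite gr_gr; apply: phi_in.
have E2 : E (gr g) (phi (gr g) x2) by apply: phi_in.
rewrite (mulB_dlt E1 E2) gd_gr eqxx gmul_r alB_id //.
have E12 : E g (rmul (phi (gr g) x1) (phi (gr g) x2)) by apply: (proj2 (EB _ _)); apply: Er_l; apply: phi_in.
rewrite (tpa_wl HB E12).1 -phi_mul // -Phi_dlt Phinv_Phi //.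
apply: SA_dlt; exact: (tpa_mulcl HA h1 h2).
Qed.

Lemma SurAP_dlt g x : D g x -> SurAP (dlt g x).
Proof.
move=> /(tpa_idm HA) [s [Hs ->]].
elim: s Hs => [|p s IH] Hs; first by rewrite /sumprod /= dlt0; apply: SurAP0.
inversion Hs; subst; case: H1 => h1 h2.
change (sumprod (p :: s)) with (radd (rmul p.1 p.2) (sumprod s)).
rewrite dlt_add; apply: SurAP_add; [exact: SurAP_dlt1 | exact: IH].
Qed.

Lemma SurA a : SA a -> SurAP a.
Proof.
move=> Sa; rewrite (decomp a).
elim: (index_enum G) => [|g s IH] /=; first exact: SurAP0.
apply: SurAP_add => //; exact: SurAP_dlt.
Qed.

Definition FdB (s : seq (Nty * Mty)) := foldr (fun p acc => fadd (sig p.1 p.2) acc) fzero s.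
Definition SurBP (x : G -> T) := exists s, x = FdB s.
Lemma FdB_cat s1 s2 : FdB (s1 ++ s2) = fadd (FdB s1) (FdB s2).
Proof. elim: s1 => [|p s IH] /=; first by rewrite fadd0. by rewrite /FdB /= -/(FdB _) IH faddA. Qed.
Lemma SurBP0 : SurBP fzero. Proof. by exists [::]. Qed.
Lemma SurBP_add x y : SurBP x -> SurBP y -> SurBP (fadd x y).
Proof. by move=> [s ->] [t ->]; exists (s ++ t); rewrite FdB_cat. Qed.

Lemma SurBP_dlt1 k h p1 p2 : gr h = gr k -> P (gd h) p1 -> P (gd h) p2 ->
  SurBP (dlt k (rmul (alB h p1) (alB h p2))).
Proof.
move=> e h1 h2.
set t := gmul (ginv h) k.
have ct : composable (ginv h) k by rewrite /composable gd_inv.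
have rt : gr t = gd h by rewrite gr_mul // gr_inv.
have cht : composable h t by rewrite /composable rt.
have ht : gmul h t = k.
  rewrite /t -gmulA //; last by rewrite /composable gr_inv.
  by rewrite -/(gr h) e gmul_r.
have Q1 : Q h (alB h p1) by exists p1.
have Q2 : Q h (alB h p2) by exists p2.
have QY := (Q_w cht (erefl (gr h)) Q2).2.2.1.
have [p' [Pp' eY]] := QY.
have Ep' : E (gd h) p' by apply: P_sub Pp'; exact: id_gd.
have Em0 : aliB h (wiR beta h t (alB h p2)) = p' by rewrite eY aliB_al.
have HN : Np (dlt h (alB h p1)).
  move=> g; rewrite /dlt; case: eqP => [->|_] //; exact: Q0.
have HM : Mp (dlt t (aliB h (wiR beta h t (alB h p2)))).
  move=> g; rewrite /dlt; case: eqP => [->|_]; last exact: P0 (id_gr g).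
  by rewrite rt Em0.
exists [:: (mkN (dlt h (alB h p1)), mkM (dlt t (aliB h (wiR beta h t (alB h p2)))))].
rewrite /FdB /= fadd0r /sig /mkM /mkN !mkS_val //.
have E1 : E (gr h) (alB h p1) by apply: Q_sub.
have E2 : E (gr t) (aliB h (wiR beta h t (alB h p2))) by rewrite rt Em0.
rewrite (mulB_dlt E1 E2) rt eqxx ht alB_ali; last exact: Q_sub.
rewrite (wR_mul cht) //; last exact: Q_sub.
by rewrite (wR_wiR cht) //; apply: Q_sub.
Qed.

Lemma SurBP_dltQ k h q : gr h = gr k -> Q h q -> SurBP (dlt k q).
Proof.
move=> e [p [/(P_idem (id_gd h)) [s [Hs ->]] ->]].
have ie := id_gd h.
have HsE : List.Forall (fun p => E (gd h) p.1 /\ E (gd h) p.2) s.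
  by apply: List.Forall_impl Hs => x [/(P_sub ie) ? /(P_sub ie) ?].
have fa : forall u v, E (gd h) u -> E (gd h) v -> alB h (radd u v) = radd (alB h u) (alB h v).
  by move=> u v hu hv; apply: alB_add.
have fm : forall u v, E (gd h) u -> E (gd h) v -> alB h (rmul u v) = rmul (alB h u) (alB h v).
  by move=> u v hu hv; apply: alB_mul.
rewrite (morph_sumprod (Ee_grp ie) (@Ee_mulcl _ ie) fa fm HsE).
elim: s Hs {HsE} => [|x s IH] Hs; first by rewrite /sumprod /= dlt0; apply: SurBP0.
inversion Hs; subst; case: H1 => h1 h2.
change (sumprod (map (fun p => (alB h p.1, alB h p.2)) (x :: s))) with
  (radd (rmul (alB h x.1) (alB h x.2)) (sumprod (map (fun p => (alB h p.1, alB h p.2)) s))).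
rewrite dlt_add; apply: SurBP_add; [exact: SurBP_dlt1 | exact: IH].
Qed.

Lemma SurBP_dltE k x : E k x -> SurBP (dlt k x).
Proof.
move=> /(Edec k) [c [Hc ->]].
apply: (big_ind (fun y => SurBP (dlt k y))).
- by rewrite dlt0; apply: SurBP0.
- by move=> y z hy hz; rewrite dlt_add; apply: SurBP_add.
- move=> h /eqP e; apply: (SurBP_dltQ e); exact: Hc.
Qed.

Lemma SurB b : SB b -> SurBP b.
Proof.
move=> Sb; rewrite (decomp b).
elim: (index_enum G) => [|g s IH] /=; first exact: SurBP0.
apply: SurBP_add => //; apply: SurBP_dltE; apply/EB; exact: Sb.
Qed.


Lemma morita : MoritaEquiv (crossed alpha) (crossed beta).
Proof.
exists Mab, Nab, lA, rB, lB, rA, tau, sig.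
split.
move=> a m m' Sa; apply: sig_eq; rewrite /= !vlA //=.
  exact: mulB_addr (PhiB Sa) (vMB m) (vMB m').
split.
move=> a a' m Sa Sa'; apply: sig_eq; rewrite /= !vlA //; last exact: SA_add.
  change (sadd a a') with (fadd a a'); rewrite Phi_add //.
  exact: mulB_addl (PhiB Sa) (PhiB Sa') (vMB m).
split.
move=> a a' m Sa Sa'; apply: sig_eq.
  have Sm := SA_mul Sa Sa'.
  rewrite /= -/(mulA a a') !vlA // Phi_mul //.
  by rewrite mulB_assoc //; [exact: PhiB | exact: PhiB | exact: vMB].
split.
move=> b m m' /SB_smem Sb; apply: sig_eq; rewrite /= !vrB //=.
  exact: mulB_addl (vMB m) (vMB m') Sb.
split.
move=> b b' m /SB_smem Sb /SB_smem Sb'; apply: sig_eq.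
  change (sadd b b') with (fadd b b').
  rewrite /= !vrB //; last exact: SB_add.
  exact: mulB_addr (vMB m) Sb Sb'.
split.
move=> b b' m /SB_smem Sb /SB_smem Sb'; apply: sig_eq.
  change (smul b b') with (@smul (crossed beta) b b'); rewrite smulB_eq //.
  rewrite /= !vrB //; last exact: SB_mulB.
  by rewrite mulB_assoc //; exact: vMB.
split.
move=> a b m Sa /SB_smem Sb; apply: sig_eq.
  rewrite /= vlA // !vrB // vlA //.
  by rewrite mulB_assoc //; [exact: PhiB | exact: vMB].
split.
move=> b n n' /SB_smem Sb; apply: sig_eq; rewrite /= !vlB //=.
  exact: mulB_addr Sb (vNB n) (vNB n').
split.
move=> b b' n /SB_smem Sb /SB_smem Sb'; apply: sig_eq.
  change (sadd b b') with (fadd b b').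
  rewrite /= !vlB //; last exact: SB_add.
  exact: mulB_addl Sb Sb' (vNB n).
split.
move=> b b' n /SB_smem Sb /SB_smem Sb'; apply: sig_eq.
  change (smul b b') with (@smul (crossed beta) b b'); rewrite smulB_eq //.
  rewrite /= !vlB //; last exact: SB_mulB.
  by rewrite mulB_assoc //; exact: vNB.
split.
move=> a n n' Sa; apply: sig_eq; rewrite /= !vrA //=.
  exact: mulB_addl (vNB n) (vNB n') (PhiB Sa).
split.
move=> a a' n Sa Sa'; apply: sig_eq; rewrite /= !vrA //; last exact: SA_add.
  change (sadd a a') with (fadd a a'); rewrite Phi_add //.
  exact: mulB_addr (vNB n) (PhiB Sa) (PhiB Sa').
split.
move=> a a' n Sa Sa'; apply: sig_eq.
  have Sm := SA_mul Sa Sa'.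
  rewrite /= -/(mulA a a') !vrA // Phi_mul //.
  by rewrite mulB_assoc //; [exact: vNB | exact: PhiB | exact: PhiB].
split.
move=> a b n Sa /SB_smem Sb; apply: sig_eq.
  rewrite /= vlB // !vrA // vlB //.
  by rewrite mulB_assoc //; [exact: vNB | exact: PhiB].
split.
move=> m n; exact: SA_Phinv (Cmn m n).
split.
move=> m m' n; rewrite /tau /=.
  rewrite mulB_addl; try exact: vMB; try exact: vNB.
  by rewrite Phinv_add //; apply: Cmn.
split.
move=> m n n'; rewrite /tau /=.
  rewrite mulB_addr; try exact: vMB; try exact: vNB.
  by rewrite Phinv_add //; apply: Cmn.
split.
move=> m n b /SB_smem Sb; rewrite /tau vrB // vlB //.
  by rewrite mulB_assoc //; [exact: vMB | exact: vNB].
split.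
move=> a m n Sa; rewrite /tau vlA // -/(mulA a _).
  have Sc := SA_Phinv (Cmn m n).
  rewrite -[in RHS](Phinv_Phi (SA_mul Sa Sc)) Phi_mul // Phi_Phinv; last exact: Cmn.
  by rewrite mulB_assoc //; [exact: PhiB | exact: vMB | exact: vNB].
split.
move=> a m n Sa; rewrite /tau vrA // -/(mulA _ a).
  have Sc := SA_Phinv (Cmn m n).
  rewrite -[in RHS](Phinv_Phi (SA_mul Sc Sa)) Phi_mul // Phi_Phinv; last exact: Cmn.
  by rewrite mulB_assoc //; [exact: vMB | exact: vNB | exact: PhiB].
split.
move=> n m; apply/SB_smem; apply: SB_mulB; [exact: vNB | exact: vMB].
split.
move=> n n' m; rewrite /sig /=; apply: mulB_addl; [exact: vNB | exact: vNB | exact: vMB].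
split.
move=> n m m'; rewrite /sig /=; apply: mulB_addr; [exact: vNB | exact: vMB | exact: vMB].
split.
move=> n m a Sa; rewrite /sig vrA // vlA //.
  by rewrite mulB_assoc //; [exact: vNB | exact: PhiB | exact: vMB].
split.
move=> b n m /SB_smem Sb; rewrite /sig vlB //.
  change (smul b _) with (@smul (crossed beta) b (mul (proj1_sig n) (proj1_sig m))).
  rewrite smulB_eq //; last by apply: SB_mulB; [exact: vNB | exact: vMB].
  by rewrite mulB_assoc //; [exact: vNB | exact: vMB].
split.
move=> b n m /SB_smem Sb; rewrite /sig vrB //.
  change (smul _ b) with (@smul (crossed beta) (mul (proj1_sig n) (proj1_sig m)) b).
  rewrite smulB_eq //; last by apply: SB_mulB; [exact: vNB | exact: vMB].
  by rewrite mulB_assoc //; [exact: vNB | exact: vMB].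
split.
move=> m n m'; apply: sig_eq; rewrite vlA; last exact: SA_Phinv (Cmn m n).
  rewrite vrB; last by apply: SB_mulB; [exact: vNB | exact: vMB].
  rewrite /tau Phi_Phinv; last exact: Cmn.
  by rewrite mulB_assoc //; [exact: vMB | exact: vNB | exact: vMB].
split.
move=> n m n'; apply: sig_eq; rewrite vrA; last exact: SA_Phinv (Cmn m n').
  rewrite vlB; last by apply: SB_mulB; [exact: vNB | exact: vMB].
  rewrite /tau Phi_Phinv; last exact: Cmn.
  by rewrite mulB_assoc //; [exact: vNB | exact: vMB | exact: vNB].
split.
move=> a Sa; have [s Hs] := SurA Sa; by exists s.
move=> b /SB_smem Sb; have [s Hs] := SurB Sb; by exists s.
Qed.

End Main.


Theorem mainTheorem4 (G : groupoid) (R T : rng)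
    (alpha : tpa_data G R) (beta : tpa_data G T) (phi : G -> R -> T) :
  unital R ->
  is_tpa alpha ->
  is_tpa beta ->
  is_global beta ->
  is_globalization alpha beta phi ->
  MoritaEquiv (crossed alpha) (crossed beta).
Proof.
move=> _ HA HB Hgl HG; exact: (morita HA HB Hgl HG).
Qed.
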